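(* Let $S$ be a finite generating subset of $\mathbb{Z}^k$. There exists a constant $C>0$ such that for every injective group homomorphism $\varphi:\mathbb{Z}^k\to\mathbb{Z}^k$ and every $x\in\mathbb{Z}^k$, $$\|x\|_S\le C\,\frac{(\max\{\|\varphi\|_S,\|\varphi(x)\|_S\})^k}{|\det(\varphi)|}.$$
   Context: $\|\cdot\|_S$ is word length with respect to $S$, $\|\varphi\|_S=\max_{s\in S}\|\varphi(s)\|_S$, and $\det(\varphi)$ is the determinant of the integer matrix representing $\varphi$. *)

(* Defs.v *)
From HB Require Import structures.
From mathcomp Require Import all_boot all_order all_algebra.
From Stdlib Require Import ClassicalEpsilon.
Set Implicit Arguments. Unset Strict Implicit. Unset Printing Implicit Defensive.
Import Order.TTheory GRing.Theory Num.Theory.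
Local Open Scope ring_scope.

(* Z^k is 'rV[int]_k ; a finite subset S of Z^k is given as a list S.
   A word over S^{+-1} is a list of pairs (i, b): letter S`_i if b = false,
   its inverse -S`_i if b = true. *)
Definition word_val (k : nat) (S : seq 'rV[int]_k) (w : seq ('I_(size S) * bool))
  : 'rV[int]_k :=
  \sum_(p <- w) (if p.2 then - S`_p.1 else S`_p.1).

Definition word_of_len (k : nat) (S : seq 'rV[int]_k) (x : 'rV[int]_k) (n : nat)
  : bool :=
  [exists t : n.-tuple ('I_(size S) * bool), @word_val k S t == x].

Definition generates (k : nat) (S : seq 'rV[int]_k) : Prop :=
  forall x : 'rV[int]_k, exists n : nat, word_of_len S x n.

(* word length ||x||_S (0 by convention if x is not in the generated subgroup) *)
Definition wordlen (k : nat) (S : seq 'rV[int]_k) (x : 'rV[int]_k) : nat :=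
  match excluded_middle_informative (exists n : nat, word_of_len S x n) with
  | left ex => ex_minn ex
  | right _ => 0%N
  end.

(* ||phi||_S = max_{s in S} ||phi(s)||_S, phi given by x |-> x *m A *)
Definition hom_norm (k : nat) (S : seq 'rV[int]_k) (A : 'M[int]_k) : nat :=
  \max_(s <- S) wordlen S (s *m A).

(* Main.v *)
Require Import Defs.
From mathcomp Require Import all_boot all_order all_algebra all_fingroup.
From Stdlib Require Import ClassicalEpsilon.
Import Order.TTheory GRing.Theory Num.Theory.
Local Open Scope ring_scope.
Set Implicit Arguments. Unset Strict Implicit.

Section W.
Variables (k : nat) (S : seq 'rV[int]_k).

Lemma wolP x n : word_of_len S x n <-> exists t, size t = n /\ @word_val k S t = x.
Proof.
split.
  by case/existsP=> t /eqP <-; exists (tval t); rewrite size_tuple.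
case=> t [Ht <-]; apply/existsP.
have Ht' : size t == n by apply/eqP.
by exists (Tuple Ht').
Qed.

Lemma wordlenP x : (exists n, word_of_len S x n) ->
  word_of_len S x (wordlen S x) /\ forall n, word_of_len S x n -> (wordlen S x <= n)%N.
Proof.
move=> E; rewrite /wordlen; case: excluded_middle_informative => [ex|//].
by case: ex_minnP.
Qed.

Lemma wl_le x n : word_of_len S x n -> (wordlen S x <= n)%N.
Proof. move=> H; have E : exists n, word_of_len S x n by exists n. by have [_ ->] := @wordlenP x E. Qed.

Lemma wl_word x (hS : generates S) : exists t, size t = wordlen S x /\ @word_val k S t = x.
Proof. by apply/wolP; apply: (proj1 (@wordlenP x (hS x))). Qed.

Lemma word_val_cons p t : @word_val k S (p :: t) =
  (if p.2 then - S`_p.1 else S`_p.1) + @word_val k S t.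
Proof. by rewrite /word_val big_cons. Qed.

Lemma wl_add (hS : generates S) x y : (wordlen S (x + y) <= wordlen S x + wordlen S y)%N.
Proof.
have [t [Ht Hx]] := wl_word x hS; have [u [Hu Hy]] := wl_word y hS.
rewrite -Ht -Hu -Hx -Hy; apply: wl_le; apply/wolP; exists (t ++ u); split; first by rewrite size_cat.
by rewrite /word_val big_cat.
Qed.

Lemma wl_opp (hS : generates S) x : (wordlen S (- x) <= wordlen S x)%N.
Proof.
have [t [Ht Hx]] := wl_word x hS.
rewrite -Ht -Hx; apply: wl_le; apply/wolP; exists (map (fun p => (p.1, ~~ p.2)) t); split.
  by rewrite size_map.
rewrite /word_val big_map -sumrN; apply: eq_bigr => p _ /=.
by case: p.2; rewrite ?opprK.
Qed.

Lemma wl_0 : wordlen S 0 = 0%N.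
Proof.
apply/eqP; rewrite -leqn0; apply: (@wl_le _ (0%N)); apply/wolP; exists [::]; split=> //.
by rewrite /word_val big_nil.
Qed.

Lemma wl_sum (hS : generates S) (I : Type) (r : seq I) (F : I -> 'rV[int]_k) :
  (wordlen S (\sum_(i <- r) F i) <= \sum_(i <- r) wordlen S (F i))%N.
Proof.
elim: r => [|a r IH]; first by rewrite !big_nil wl_0.
rewrite !big_cons; apply: leq_trans (wl_add hS _ _) _.
by rewrite leq_add2l.
Qed.

Lemma wl_muln (hS : generates S) x n : (wordlen S (x *+ n) <= n * wordlen S x)%N.
Proof.
elim: n => [|n IH]; first by rewrite mulr0n wl_0.
rewrite mulrS mulSn; apply: leq_trans (wl_add hS _ _) _.
by rewrite leq_add2l.
Qed.

Lemma wl_scale (hS : generates S) x (z : int) : (wordlen S (z *: x) <= `|z|%N * wordlen S x)%N.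
Proof.
have e : forall m : nat, (Posz m) *: x = x *+ m by move=> m; rewrite -scaler_nat natz.
case: z => n.
  by rewrite e wl_muln.
rewrite NegzE scaleNr; apply: leq_trans (wl_opp hS _) _.
by rewrite e wl_muln.
Qed.

Definition Mx : nat := \max_(s <- S) \max_(j < k) absz (s 0%R j).

Lemma entry_word t j : (`|(@word_val k S t) 0 j| <= (size t * Mx)%N%:Z)%R.
Proof.
elim: t => [|p t IH]; first by rewrite /word_val big_nil mxE.
rewrite word_val_cons mxE /= mulSn PoszD; apply: le_trans (ler_normD _ _) _.
apply: lerD => //.
have hs : `|(S`_p.1) 0 j| <= Mx%:Z.
  rewrite -abszE lez_nat /Mx.
  have hm : S`_p.1 \in S by apply: mem_nth.
  apply: (leq_trans _ (@leq_bigmax_seq _ S xpredT (fun s => \max_(j < k) absz (s 0%R j)) _ hm isT)).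
  exact: (@leq_bigmax _ (fun j => absz ((S`_p.1) 0%R j)) j).
by case: p.2; rewrite ?mxE ?normrN.
Qed.

Lemma entry_wl (hS : generates S) (y : 'rV[int]_k) (j : 'I_k) : (`|y 0 j| <= (wordlen S y * Mx)%N%:Z)%R.
Proof. by have [t [Ht Hx]] := wl_word y hS; rewrite -Ht -Hx; apply: entry_word. Qed.

Lemma wl_hom (hS : generates S) (A : 'M[int]_k) x :
  (wordlen S (x *m A) <= wordlen S x * hom_norm S A)%N.
Proof.
have [t [Ht Hx]] := wl_word x hS.
rewrite -Ht -Hx /word_val mulmx_suml; apply: leq_trans (wl_sum hS _ _) _.
rewrite -[size t]sum1_size big_distrl /=; apply: leq_sum => p _; rewrite mul1n.
have h : (wordlen S (S`_p.1 *m A) <= hom_norm S A)%N.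
  have hm : S`_p.1 \in S by apply: mem_nth.
  exact: (@leq_bigmax_seq _ S xpredT (fun s => wordlen S (s *m A)) _ hm isT).
by case: p.2 => //; rewrite mulNmx; apply: leq_trans (wl_opp hS _) h.
Qed.

End W.

Lemma det_bound n (B : 'M[int]_n) (b : int) : 0 <= b ->
  (forall i j, `|B i j| <= b) -> `|\det B| <= (n`!)%:Z * b ^+ n.
Proof.
move=> b0 hB; rewrite /determinant; apply: le_trans (ler_norm_sum _ _ _) _.
apply: le_trans (@ler_sum _ _ _ _ _ (fun _ => b ^+ n) _) _.
  move=> s _; rewrite normrM normr_sign mul1r normr_prod.
  rewrite -[X in b ^+ X](card_ord n) -prodr_const.
  by apply: ler_prod => i _; rewrite normr_ge0 hB.
by rewrite sumr_const card_Sn -mulr_natl natz.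
Qed.

From mathcomp Require Import ring.
Theorem mainTheorem10 (k : nat) (S : seq 'rV[int]_k) (hS : generates S) :
  exists C : rat, 0 < C /\
    forall (A : 'M[int]_k),
      injective (fun x : 'rV[int]_k => x *m A) ->
      forall x : 'rV[int]_k,
        ((wordlen S x)%:R : rat) <=
          C * ((maxn (hom_norm S A) (wordlen S (x *m A)))%:R ^+ k)
            / `|(\det A)%:~R|.
Proof.
move: S hS; case: k => [|n] S hS.
  exists 1; split => // A _ x.
  have -> : x = 0 by apply/rowP => -[].
  rewrite wl_0.
  by rewrite ?ler0n divr_ge0 ?normr_ge0 // mulr_ge0 // exprn_ge0 // ler0n.
set M := @Mx _ S.
set L := \max_(j < n.+1) wordlen S (delta_mx 0%R j : 'rV[int]_n.+1).
set K := (n.+1 * n.+1 * n`! * M ^ n.+1 * L ^ n.+1)%N.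
exists (K.+1)%:R; split => // A inj x.
set y := x *m A.
set m := maxn (hom_norm S A) (wordlen S y).
have dA : \det A != 0.
  apply/negP => /det0P [v vn0 vA]; apply/negP: vn0; rewrite negbK; apply/eqP.
  by apply: inj; rewrite /= vA mul0mx.
have hL : forall j, (wordlen S (delta_mx 0%R j : 'rV[int]_n.+1) <= L)%N.
  by move=> j; apply: (@leq_bigmax _ (fun j => wordlen S (delta_mx 0%R j : 'rV[int]_n.+1)) j).
have hA : forall i j, `|A i j| <= (M * (L * m))%N%:Z.
  move=> i j; have -> : A i j = row i A 0 j by rewrite mxE.
  apply: le_trans (entry_wl hS _ _) _; rewrite lez_nat mulnC leq_mul2l; apply/orP; right.
  rewrite rowE; apply: leq_trans (wl_hom hS _ _) _.
  by apply: leq_mul; [apply: hL | apply: leq_maxl].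
have hadj : forall i j, `|\adj A i j| <= (n`!)%:Z * ((M * (L * m))%N%:Z) ^+ n.
  move=> i j; rewrite mxE /cofactor normrM normr_sign mul1r.
  by apply: det_bound => // a b; rewrite !mxE.
have hy : forall i, `|y 0 i| <= (m * M)%N%:Z.
  move=> i; apply: le_trans (entry_wl hS _ _) _; rewrite lez_nat leq_mul2r; apply/orP; right.
  exact: leq_maxr.
have eq : \det A *: x = y *m \adj A by rewrite /y -mulmxA mul_mx_adj mul_mx_scalar.
have hx : forall j, `|\det A| * `|x 0 j| <= n.+1%:R * ((m * M)%N%:Z * ((n`!)%:Z * ((M * (L * m))%N%:Z) ^+ n)).
  move=> j; rewrite -normrM.
  have -> : \det A * x 0 j = (y *m \adj A) 0 j by rewrite -eq mxE.
  rewrite mxE; apply: le_trans (ler_norm_sum _ _ _) _.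
  rewrite mulr_natl -[X in _ *+ X](card_ord n.+1) -sumr_const.
  apply: ler_sum => i _; rewrite normrM; apply: ler_pM => //.
have hw : (wordlen S x <= \sum_j absz (x 0%R j) * L)%N.
  rewrite {1}(row_sum_delta x); apply: leq_trans (wl_sum hS _ _) _.
  apply: leq_sum => j _; apply: leq_trans (wl_scale hS _ _) _.
  by rewrite leq_mul2l hL orbT.
have hsum : (wordlen S x)%:Z * `|\det A| <= \sum_(j < n.+1) (L%:Z * (n.+1%:R * ((m * M)%N%:Z * ((n`!)%:Z * ((M * (L * m))%N%:Z) ^+ n)))).
  apply: le_trans (_ : ((\sum_j absz (x 0%R j) * L)%N)%:Z * `|\det A| <= _).
    by rewrite ler_pM2r ?normr_gt0 // lez_nat.
  rewrite -natz natr_sum mulr_suml; apply: ler_sum => j _.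
  rewrite natrM !natz abszE mulrAC mulrC [`|x 0 j| * _]mulrC.
  by apply: ler_wpM2l => //; have := hx j; rewrite natz.
have hint : (wordlen S x)%:Z * `|\det A| <= (K * m ^ n.+1)%N%:Z.
  apply: (le_trans hsum); rewrite sumr_const card_ord.
  have PX : forall a b : nat, Posz (a ^ b) = (Posz a) ^+ b by move=> a b; rewrite -!natz natrX.
  rewrite -mulr_natr le_eqVlt; apply/orP; left; apply/eqP.
  rewrite /K !PoszM !PX -!natz !exprS !exprMn !natz; ring.
have d0 : 0 < `|(\det A)%:~R : rat| by rewrite normr_gt0 intr_eq0.
rewrite ler_pdivlMr //.
apply: le_trans (_ : (K * m ^ n.+1)%N%:R <= _).
  rewrite -intr_norm; move: hint; rewrite -(ler_int rat) rmorphM /= => h.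
  by rewrite -!pmulrn in h.
by rewrite natrM natrX ler_wpM2r ?exprn_ge0 // ler_nat.
Qed.
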